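(* Let $\mathcal{Q}$ be a small involutive quantaloid. The full inclusion of the symmetrically complete symmetric $\mathcal{Q}$-categories into $\mathsf{SymCat}(\mathcal{Q})$ admits a left adjoint. Explicitly, for a symmetric $\mathcal{Q}$-category $\mathbb{A}$ the reflection is $\mathbb{A}_{\mathsf{sc}}$, the full subcategory of the Cauchy completion $\mathbb{A}_{\mathsf{cc}}$ on the symmetric left adjoint presheaves, and the unit at $\mathbb{A}$ is the functor $Y_{\mathbb{A}}\colon\mathbb{A}\to\mathbb{A}_{\mathsf{sc}}$, $x\mapsto\mathbb{A}(-,x)$.
   Context: A quantaloid is a category enriched in $\mathsf{Sup}$; an involution is an identity-on-objects, direction-reversing, monotone map $f\mapsto f^{\mathsf o}$ on morphisms with $(g\circ f)^{\mathsf o}=f^{\mathsf o}\circ g^{\mathsf o}$, $f^{\mathsf{oo}}=f$. A $\mathcal{Q}$-category $\mathbb{A}$: objects with types $tx\in\mathcal{Q}_0$, homs $\mathbb{A}(y,x)\colon tx\to ty$ with $\mathbb{A}(z,y)\circ\mathbb{A}(y,x)\le\mathbb{A}(z,x)$, $1_{tx}\le\mathbb{A}(x,x)$; symmetric if $\mathbb{A}(x,y)=\mathbb{A}(y,x)^{\mathsf o}$. Functors: type-preserving object maps $F$ with $\mathbb{A}(y,x)\le\mathbb{B}(Fy,Fx)$; $\mathsf{SymCat}(\mathcal{Q})$ is the category of symmetric $\mathcal{Q}$-categories and functors. Distributors $\Phi\colon\mathbb{A}\to\mathbb{B}$: arrows $\Phi(y,x)\colon tx\to ty$ compatible with the homs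 on both sides; composition $(\Psi\otimes\Phi)(z,x)=\bigvee_y\Psi(z,y)\circ\Phi(y,x)$; left adjoint with right adjoint $\Phi^*$ if $\mathbb{A}\le\Phi^*\otimes\Phi$, $\Phi\otimes\Phi^*\le\mathbb{B}$. For symmetric $\mathbb{A},\mathbb{B}$: $\Phi^{\mathsf o}(x,y)=\Phi(y,x)^{\mathsf o}$, and $\Phi$ is a symmetric left adjoint if left adjoint to $\Phi^{\mathsf o}$. $*_X$: one object of type $X$, hom $1_X$; a presheaf is a distributor $*_X\to\mathbb{A}$; it is representable if it equals $\mathbb{A}(-,a)$. $\mathbb{A}_{\mathsf{cc}}$: objects the left adjoint presheaves $\phi\colon *_X\to\mathbb{A}$ (type $X$), hom $\mathbb{A}_{\mathsf{cc}}(\psi,\phi)$ the unique element of $\psi^*\otimes\phi$. A symmetric $\mathbb{A}$ is symmetrically complete if every symmetric left adjoint presheaf on $\mathbb{A}$ is representable (equivalently, for every symmetric $\mathbb{B}$, $F\mapsto\mathbb{A}(-,F-)$ gives an equivalence between functors $\mathbb{B}\to\mathbb{A}$ and symmetric left adjoint distributors $\mathbb{B}\to\mathbb{A}$). *)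

(* Defs.v *)
Set Implicit Arguments.
Unset Strict Implicit.

Record Quantaloid := {
  qob : Type;
  qhom : qob -> qob -> Type;
  qle : forall X Y, qhom X Y -> qhom X Y -> Prop;
  qsup : forall X Y, (qhom X Y -> Prop) -> qhom X Y;
  qcomp : forall X Y Z, qhom Y Z -> qhom X Y -> qhom X Z;
  qid : forall X, qhom X X;
  qle_refl : forall X Y (f : qhom X Y), qle f f;
  qle_trans : forall X Y (f g h : qhom X Y), qle f g -> qle g h -> qle f h;
  qle_antisym : forall X Y (f g : qhom X Y), qle f g -> qle g f -> f = g;
  qsup_ub : forall X Y (S : qhom X Y -> Prop) f, S f -> qle f (qsup S);
  qsup_least : forall X Y (S : qhom X Y -> Prop) g,
      (forall f, S f -> qle f g) -> qle (qsup S) g;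
  qcompA : forall W X Y Z (h : qhom Y Z) (g : qhom X Y) (f : qhom W X),
      qcomp h (qcomp g f) = qcomp (qcomp h g) f;
  qcomp1l : forall X Y (f : qhom X Y), qcomp (qid Y) f = f;
  qcomp1r : forall X Y (f : qhom X Y), qcomp f (qid X) = f;
  qcomp_supr : forall X Y Z (g : qhom Y Z) (S : qhom X Y -> Prop),
      qcomp g (qsup S) = qsup (fun h => exists f, S f /\ h = qcomp g f);
  qcomp_supl : forall X Y Z (S : qhom Y Z -> Prop) (f : qhom X Y),
      qcomp (qsup S) f = qsup (fun h => exists g, S g /\ h = qcomp g f);
  qinv : forall X Y, qhom X Y -> qhom Y X;
  qinv_mono : forall X Y (f g : qhom X Y), qle f g -> qle (qinv f) (qinv g);
  qinv_comp : forall X Y Z (g : qhom Y Z) (f : qhom X Y),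
      qinv (qcomp g f) = qcomp (qinv f) (qinv g);
  qinv_inv : forall X Y (f : qhom X Y), qinv (qinv f) = f
}.

Arguments qhom : clear implicits.
Arguments qle {q X Y}.
Arguments qsup {q X Y}.
Arguments qcomp {q X Y Z}.
Arguments qid {q}.
Arguments qinv {q X Y}.

Unset Implicit Arguments.
Section QCats.
Variable Q : Quantaloid.

Definition cast {X X' Y Y' : qob Q} (e1 : X = X') (e2 : Y = Y')
  (f : qhom Q X Y) : qhom Q X' Y' :=
  match e1 in _ = X1, e2 in _ = Y1 return qhom Q X1 Y1 with
  | eq_refl, eq_refl => f end.

Record QCat := {
  cobj : Type;
  cty : cobj -> qob Q;
  chom : forall y x : cobj, qhom Q (cty x) (cty y)
}.

Definition is_QCat (A : QCat) : Prop :=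
  (forall x y z, qle (qcomp (chom A z y) (chom A y x)) (chom A z x)) /\
  (forall x, qle (qid (cty A x)) (chom A x x)).

Definition symmetric (A : QCat) : Prop :=
  forall x y, chom A x y = qinv (chom A y x).

Record Functor (A B : QCat) := {
  fmap :> cobj A -> cobj B;
  ftype : forall x, cty B (fmap x) = cty A x
}.
Arguments fmap {A B}.
Arguments ftype {A B}.

Definition is_functor {A B : QCat} (F : Functor A B) : Prop :=
  forall y x, qle (chom A y x)
                  (cast (ftype F x) (ftype F y) (chom B (F y) (F x))).

Definition fcomp {A B C : QCat} (G : Functor B C) (F : Functor A B)
  : Functor A C :=
  {| fmap := fun x => G (F x);
     ftype := fun x => eq_trans (ftype G (F x)) (ftype F x) |}.

Definition fiso {A B : QCat} (F G : Functor A B) : Prop :=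
  forall x,
    qle (qid (cty A x)) (cast (ftype G x) (ftype F x) (chom B (F x) (G x))) /\
    qle (qid (cty A x)) (cast (ftype F x) (ftype G x) (chom B (G x) (F x))).

Definition Dist (A B : QCat) : Type :=
  forall (y : cobj B) (x : cobj A), qhom Q (cty A x) (cty B y).

Definition is_dist {A B : QCat} (Phi : Dist A B) : Prop :=
  (forall y' y x, qle (qcomp (chom B y' y) (Phi y x)) (Phi y' x)) /\
  (forall y x x', qle (qcomp (Phi y x) (chom A x x')) (Phi y x')).

Definition dcomp {A B C : QCat} (Psi : Dist B C) (Phi : Dist A B) : Dist A C :=
  fun z x => qsup (fun h => exists y, h = qcomp (Psi z y) (Phi y x)).

Definition dle {A B : QCat} (Phi Phi' : Dist A B) : Prop :=
  forall y x, qle (Phi y x) (Phi' y x).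

Definition didd (A : QCat) : Dist A A := chom A.

Definition adjoint {A B : QCat} (Phi : Dist A B) (Psi : Dist B A) : Prop :=
  dle (didd A) (dcomp Psi Phi) /\ dle (dcomp Phi Psi) (didd B).

Definition ddual {A B : QCat} (Phi : Dist A B) : Dist B A :=
  fun x y => qinv (Phi y x).

Definition star (X : qob Q) : QCat :=
  {| cobj := unit; cty := fun _ => X; chom := fun _ _ => qid X |}.

Definition presheaf (A : QCat) (X : qob Q) : Type := Dist (star X) A.

Definition representable {A : QCat} {X : qob Q} (phi : presheaf A X) : Prop :=
  exists (a : cobj A) (e : cty A a = X),
    forall y, phi y tt = cast e eq_refl (chom A y a).

Definition sym_left_adjoint {A B : QCat} (Phi : Dist A B) : Prop :=
  adjoint Phi (ddual Phi).

Definition sym_complete (A : QCat) : Prop :=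
  forall (X : qob Q) (phi : presheaf A X),
    is_dist phi -> sym_left_adjoint phi -> representable phi.

(* Cauchy completion A_cc: objects are left adjoint presheaves phi
   (together with their -- unique -- right adjoint phi^* ), of type X;
   A_cc(psi, phi) = the unique element of psi^* (x) phi. *)
Record cc_obj (A : QCat) := {
  cc_ty : qob Q;
  cc_ps : presheaf A cc_ty;
  cc_radj : Dist A (star cc_ty);
  cc_ps_dist : is_dist cc_ps;
  cc_radj_dist : is_dist cc_radj;
  cc_adj : adjoint cc_ps cc_radj
}.
Arguments cc_ty {A}.
Arguments cc_ps {A}.
Arguments cc_radj {A}.

Definition Acc (A : QCat) : QCat :=
  {| cobj := cc_obj A;
     cty := @cc_ty A;
     chom := fun psi phi => dcomp (cc_radj psi) (cc_ps phi) tt tt |}.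

Definition Asc (A : QCat) : QCat :=
  {| cobj := { p : cc_obj A | sym_left_adjoint (cc_ps p) };
     cty := fun p => cc_ty (proj1_sig p);
     chom := fun q p => chom (Acc A) (proj1_sig q) (proj1_sig p) |}.

End QCats.

Arguments cast {Q X X' Y Y'}.
Arguments cobj {Q}.
Arguments cty {Q}.
Arguments chom {Q}.
Arguments is_QCat {Q}.
Arguments symmetric {Q}.
Arguments Functor {Q}.
Arguments fmap {Q A B}.
Arguments ftype {Q A B}.
Arguments is_functor {Q A B}.
Arguments fcomp {Q A B C}.
Arguments fiso {Q A B}.
Arguments Dist {Q}.
Arguments is_dist {Q A B}.
Arguments dcomp {Q A B C}.
Arguments dle {Q A B}.
Arguments didd {Q}.
Arguments adjoint {Q A B}.
Arguments ddual {Q A B}.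
Arguments star {Q}.
Arguments presheaf {Q}.
Arguments representable {Q A X}.
Arguments sym_left_adjoint {Q A B}.
Arguments sym_complete {Q}.
Arguments cc_obj {Q}.
Arguments cc_ty {Q A}.
Arguments cc_ps {Q A}.
Arguments cc_radj {Q A}.
Arguments Acc {Q}.
Arguments Asc {Q}.

(* Main.v *)
Require Import Defs.
From Stdlib Require Import ClassicalEpsilon.

Lemma qle_eq {Q : Quantaloid} {X Y} (f g : qhom Q X Y) : f = g -> qle f g.
Proof. intros ->; apply qle_refl. Qed.

Lemma qcomp_mono_r {Q : Quantaloid} {X Y Z} (h : qhom Q Y Z) (f g : qhom Q X Y) :
  qle f g -> qle (qcomp h f) (qcomp h g).
Proof.
  intros Hfg.
  assert (E : qsup (fun k => k = f \/ k = g) = g).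
  { apply qle_antisym.
    - apply qsup_least. intros k [->| ->]; [exact Hfg | apply qle_refl].
    - apply qsup_ub. right; reflexivity. }
  rewrite <- E, qcomp_supr. apply qsup_ub. exists f. split; [left; reflexivity | reflexivity].
Qed.

Lemma qcomp_mono_l {Q : Quantaloid} {X Y Z} (h : qhom Q X Y) (f g : qhom Q Y Z) :
  qle f g -> qle (qcomp f h) (qcomp g h).
Proof.
  intros Hfg.
  assert (E : qsup (fun k => k = f \/ k = g) = g).
  { apply qle_antisym.
    - apply qsup_least. intros k [->| ->]; [exact Hfg | apply qle_refl].
    - apply qsup_ub. right; reflexivity. }
  rewrite <- E, qcomp_supl. apply qsup_ub. exists f. split; [left; reflexivity | reflexivity].
Qed.

Lemma qcomp_mono {Q : Quantaloid} {X Y Z} (f f' : qhom Q X Y) (g g' : qhom Q Y Z) :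
  qle f f' -> qle g g' -> qle (qcomp g f) (qcomp g' f').
Proof.
  intros H1 H2. eapply qle_trans. apply qcomp_mono_r, H1. apply qcomp_mono_l, H2.
Qed.

Lemma le_supex {Q : Quantaloid} {X Y} {I : Type} (F : I -> qhom Q X Y) g (i : I) :
  qle g (F i) -> qle g (qsup (fun h => exists y, h = F y)).
Proof. intros H. eapply qle_trans; [exact H|]. apply qsup_ub. exists i; reflexivity. Qed.

Lemma supex_le {Q : Quantaloid} {X Y} {I : Type} (F : I -> qhom Q X Y) g :
  (forall i, qle (F i) g) -> qle (qsup (fun h => exists y, h = F y)) g.
Proof. intros H. apply qsup_least. intros f [y ->]. apply H. Qed.

Lemma comp_supex_r_le {Q : Quantaloid} {X Y Z} {I : Type} (F : I -> qhom Q X Y)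
  (g : qhom Q Y Z) c :
  (forall i, qle (qcomp g (F i)) c) -> qle (qcomp g (qsup (fun h => exists y, h = F y))) c.
Proof.
  intros H. rewrite qcomp_supr. apply qsup_least. intros k [f [[y ->] ->]]. apply H.
Qed.

Lemma comp_supex_l_le {Q : Quantaloid} {X Y Z} {I : Type} (F : I -> qhom Q Y Z)
  (g : qhom Q X Y) c :
  (forall i, qle (qcomp (F i) g) c) -> qle (qcomp (qsup (fun h => exists y, h = F y)) g) c.
Proof.
  intros H. rewrite qcomp_supl. apply qsup_least. intros k [f [[y ->] ->]]. apply H.
Qed.

Lemma qinv_sup_le {Q : Quantaloid} {X Y} (S : qhom Q X Y -> Prop) c :
  (forall f, S f -> qle (qinv f) c) -> qle (qinv (qsup S)) c.
Proof.
  intros H. rewrite <- (qinv_inv c). apply qinv_mono. apply qsup_least.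
  intros f Sf. rewrite <- (qinv_inv f). apply qinv_mono. apply H, Sf.
Qed.

Lemma qinv_supex_le {Q : Quantaloid} {X Y} {I : Type} (F : I -> qhom Q X Y) c :
  (forall i, qle (qinv (F i)) c) -> qle (qinv (qsup (fun h => exists y, h = F y))) c.
Proof. intros H. apply qinv_sup_le. intros f [y ->]. apply H. Qed.

Lemma qinv_le_iff {Q : Quantaloid} {X Y} (f : qhom Q X Y) g :
  qle f (qinv g) -> qle (qinv f) g.
Proof. intros H. rewrite <- (qinv_inv g). apply qinv_mono, H. Qed.

Lemma qinv_id {Q : Quantaloid} (X : qob Q) : qinv (qid X) = qid X.
Proof.
  transitivity (qcomp (qinv (qid X)) (qinv (qinv (qid X)))).
  - rewrite qinv_inv, qcomp1r. reflexivity.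
  - rewrite <- qinv_comp, qcomp1r. apply qinv_inv.
Qed.

Lemma cast_comp {Q : Quantaloid} {X X' Y Y' Z Z' : qob Q}
  (e1 : X = X') (e2 : Y = Y') (e3 : Z = Z') (f : qhom Q X Y) (g : qhom Q Y Z) :
  qcomp (cast e2 e3 g) (cast e1 e2 f) = cast e1 e3 (qcomp g f).
Proof. destruct e1, e2, e3. reflexivity. Qed.

Lemma cast_mono {Q : Quantaloid} {X X' Y Y' : qob Q} (e1 : X = X') (e2 : Y = Y')
  (f g : qhom Q X Y) : qle f g -> qle (cast e1 e2 f) (cast e1 e2 g).
Proof. destruct e1, e2. auto. Qed.

Lemma cast_inv {Q : Quantaloid} {X X' Y Y' : qob Q} (e1 : X = X') (e2 : Y = Y')
  (f : qhom Q X Y) : qinv (cast e1 e2 f) = cast e2 e1 (qinv f).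
Proof. destruct e1, e2. reflexivity. Qed.

Lemma cast_id {Q : Quantaloid} {X X' : qob Q} (e : X = X') :
  cast e e (qid X) = qid X'.
Proof. destruct e. reflexivity. Qed.

Lemma cast_supex {Q : Quantaloid} {X X' Y Y' : qob Q} {I : Type} (e1 : X = X') (e2 : Y = Y')
  (F : I -> qhom Q X Y) :
  cast e1 e2 (qsup (fun h => exists y, h = F y))
  = qsup (fun h => exists y, h = cast e1 e2 (F y)).
Proof. destruct e1, e2. reflexivity. Qed.

Lemma cast_le_l {Q : Quantaloid} {X X' Y Y' : qob Q} (e1 : X = X') (e2 : Y = Y')
  (f : qhom Q X Y) (g : qhom Q X' Y') :
  qle f (cast (eq_sym e1) (eq_sym e2) g) -> qle (cast e1 e2 f) g.
Proof. destruct e1, e2. auto. Qed.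

Lemma cast_le_r {Q : Quantaloid} {X X' Y Y' : qob Q} (e1 : X = X') (e2 : Y = Y')
  (f : qhom Q X Y) (g : qhom Q X' Y') :
  qle (cast (eq_sym e1) (eq_sym e2) g) f -> qle g (cast e1 e2 f).
Proof. destruct e1, e2. auto. Qed.

Lemma cast_cast {Q : Quantaloid} {X X' X'' Y Y' Y'' : qob Q} (e1 : X = X') (e2 : Y = Y')
  (e1' : X' = X'') (e2' : Y' = Y'') (f : qhom Q X Y) :
  cast e1' e2' (cast e1 e2 f) = cast (eq_trans e1 e1') (eq_trans e2 e2') f.
Proof. destruct e1, e2, e1', e2'. reflexivity. Qed.

Lemma ps_dist {Q : Quantaloid} {A : QCat Q} (p : cc_obj A) y' y :
  qle (qcomp (chom A y' y) (cc_ps p y tt)) (cc_ps p y' tt).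
Proof. apply (proj1 (cc_ps_dist _ _ p)). Qed.

Lemma radj_dist {Q : Quantaloid} {A : QCat Q} (p : cc_obj A) x x' :
  qle (qcomp (cc_radj p tt x) (chom A x x')) (cc_radj p tt x').
Proof. apply (proj2 (cc_radj_dist _ _ p)). Qed.

Lemma cc_unit {Q : Quantaloid} {A : QCat Q} (p : cc_obj A) :
  qle (qid (cc_ty p)) (qsup (fun h => exists y, h = qcomp (cc_radj p tt y) (cc_ps p y tt))).
Proof. apply (proj1 (cc_adj _ _ p) tt tt). Qed.

Lemma cc_counit {Q : Quantaloid} {A : QCat Q} (p : cc_obj A) y x :
  qle (qcomp (cc_ps p y tt) (cc_radj p tt x)) (chom A y x).
Proof.
  eapply qle_trans; [| apply (proj2 (cc_adj _ _ p) y x)].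
  apply (le_supex (fun u => qcomp (cc_ps p y u) (cc_radj p u x)) _ tt). apply qle_refl.
Qed.

Lemma radj_le {Q : Quantaloid} {A : QCat Q} {X : qob Q}
  (phi : forall y, qhom Q X (cty A y)) (rho rho' : forall y, qhom Q (cty A y) X) :
  (forall y x, qle (qcomp (phi y) (rho x)) (chom A y x)) ->
  qle (qid X) (qsup (fun h => exists y, h = qcomp (rho' y) (phi y))) ->
  (forall x x', qle (qcomp (rho' x) (chom A x x')) (rho' x')) ->
  forall x, qle (rho x) (rho' x).
Proof.
  intros Hc Hu Hd x.
  eapply qle_trans. { rewrite <- (qcomp1l (rho x)). apply qcomp_mono_l, Hu. }
  apply comp_supex_l_le. intros y. rewrite <- qcompA.
  eapply qle_trans; [apply qcomp_mono_r, Hc | apply Hd].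
Qed.

Lemma sym_radj {Q : Quantaloid} {A : QCat Q} (HS : symmetric A) (p : cc_obj A) :
  sym_left_adjoint (cc_ps p) -> forall x, cc_radj p tt x = qinv (cc_ps p x tt).
Proof.
  intros [Hu Hc] x. apply qle_antisym.
  - apply (radj_le (fun y => cc_ps p y tt) (fun y => cc_radj p tt y)
             (fun y => qinv (cc_ps p y tt))).
    + intros; apply cc_counit.
    + apply (Hu tt tt).
    + intros x0 x'. rewrite (HS x0 x'), <- qinv_comp. apply qinv_mono, ps_dist.
  - apply (radj_le (fun y => cc_ps p y tt) (fun y => qinv (cc_ps p y tt))
             (fun y => cc_radj p tt y)).
    + intros y x0. eapply qle_trans; [| apply (Hc y x0)].
      apply (le_supex (fun u => qcomp (cc_ps p y u) (qinv (cc_ps p x0 u))) _ tt). apply qle_refl.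
    + apply cc_unit.
    + intros; apply radj_dist.
Qed.

Lemma Y_ps_dist {Q : Quantaloid} {A : QCat Q} (HA : is_QCat A) x :
  is_dist (A := star (cty A x)) (B := A) (fun y _ => chom A y x).
Proof.
  split.
  - intros; apply (proj1 HA).
  - intros y u u'. cbn. rewrite qcomp1r. apply qle_refl.
Qed.

Lemma Y_radj_dist {Q : Quantaloid} {A : QCat Q} (HA : is_QCat A) x :
  is_dist (A := A) (B := star (cty A x)) (fun _ y => chom A x y).
Proof.
  split.
  - intros u' u y. cbn. rewrite qcomp1l. apply qle_refl.
  - intros; apply (proj1 HA).
Qed.

Lemma Y_adj {Q : Quantaloid} {A : QCat Q} (HA : is_QCat A) x :
  adjoint (A := star (cty A x)) (B := A) (fun y _ => chom A y x) (fun _ y => chom A x y).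
Proof.
  split.
  - intros u u'. unfold didd, dcomp; cbn.
    apply (le_supex (fun y => qcomp (chom A x y) (chom A y x)) _ x).
    rewrite <- (qcomp1l (qid (cty A x))). apply qcomp_mono; apply (proj2 HA).
  - intros y y'. unfold didd, dcomp; cbn.
    apply supex_le. intros _. apply (proj1 HA).
Qed.

Definition Yobj {Q : Quantaloid} {A : QCat Q} (HA : is_QCat A) (x : cobj A) : cc_obj A :=
  {| cc_ty := cty A x;
     cc_ps := fun y _ => chom A y x;
     cc_radj := fun _ y => chom A x y;
     cc_ps_dist := Y_ps_dist HA x;
     cc_radj_dist := Y_radj_dist HA x;
     cc_adj := Y_adj HA x |}.

Lemma Y_sym {Q : Quantaloid} {A : QCat Q} (HA : is_QCat A) (HS : symmetric A) x :
  sym_left_adjoint (cc_ps (Yobj HA x)).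
Proof.
  split.
  - intros u u'. unfold didd, dcomp, ddual; cbn.
    apply (le_supex (fun y => qcomp (qinv (chom A y x)) (chom A y x)) _ x).
    rewrite <- HS. rewrite <- (qcomp1l (qid (cty A x))). apply qcomp_mono; apply (proj2 HA).
  - intros y y'. unfold didd, dcomp, ddual; cbn.
    apply supex_le. intros _. rewrite <- HS. apply (proj1 HA).
Qed.

Definition Ycc {Q : Quantaloid} {A : QCat Q} (HA : is_QCat A) (HS : symmetric A)
  (x : cobj A) : cobj (Asc A) := exist _ (Yobj HA x) (Y_sym HA HS x).

Definition Yf {Q : Quantaloid} {A : QCat Q} (HA : is_QCat A) (HS : symmetric A)
  : Functor A (Asc A) := {| fmap := Ycc HA HS; ftype := fun x => eq_refl |}.

Lemma yoneda1 {Q : Quantaloid} {A : QCat Q} (HA : is_QCat A) (HS : symmetric A)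
  (x : cobj A) (p : cobj (Asc A)) :
  chom (Asc A) (Ycc HA HS x) p = cc_ps (proj1_sig p) x tt.
Proof.
  cbn. unfold dcomp. cbn. apply qle_antisym.
  - apply supex_le. intros y. apply ps_dist.
  - apply (le_supex (fun y => qcomp (chom A x y) (cc_ps (proj1_sig p) y tt)) _ x).
    rewrite <- (qcomp1l (cc_ps (proj1_sig p) x tt)) at 1. apply qcomp_mono_l, (proj2 HA).
Qed.

Lemma yoneda2 {Q : Quantaloid} {A : QCat Q} (HA : is_QCat A) (HS : symmetric A)
  (x : cobj A) (p : cobj (Asc A)) :
  chom (Asc A) p (Ycc HA HS x) = cc_radj (proj1_sig p) tt x.
Proof.
  cbn. unfold dcomp. cbn. apply qle_antisym.
  - apply supex_le. intros y. apply radj_dist.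
  - apply (le_supex (fun y => qcomp (cc_radj (proj1_sig p) tt y) (chom A y x)) _ x).
    rewrite <- (qcomp1r (cc_radj (proj1_sig p) tt x)) at 1. apply qcomp_mono_r, (proj2 HA).
Qed.

Lemma Asc_QCat {Q : Quantaloid} {A : QCat Q} (HA : is_QCat A) : is_QCat (Asc A).
Proof.
  split.
  - intros p q r. cbn. unfold dcomp.
    apply comp_supex_l_le. intros z. apply comp_supex_r_le. intros y.
    apply (le_supex (fun y => qcomp (cc_radj (proj1_sig r) tt y) (cc_ps (proj1_sig p) y tt)) _ z).
    rewrite <- !qcompA. apply qcomp_mono_r. rewrite qcompA.
    eapply qle_trans; [apply qcomp_mono_l, cc_counit | apply ps_dist].
  - intros p. apply cc_unit.
Qed.

Lemma Asc_sym {Q : Quantaloid} {A : QCat Q} (HA : is_QCat A) (HS : symmetric A) :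
  symmetric (Asc A).
Proof.
  intros q p. cbn. unfold dcomp.
  assert (E : forall y, qinv (qcomp (cc_radj (proj1_sig p) tt y) (cc_ps (proj1_sig q) y tt))
            = qcomp (cc_radj (proj1_sig q) tt y) (cc_ps (proj1_sig p) y tt)).
  { intros y. rewrite qinv_comp, (sym_radj HS _ (proj2_sig p)), (sym_radj HS _ (proj2_sig q)).
    rewrite qinv_inv. reflexivity. }
  apply qle_antisym.
  - apply supex_le. intros y. rewrite <- E. apply qinv_mono.
    apply (le_supex (fun y => qcomp (cc_radj (proj1_sig p) tt y) (cc_ps (proj1_sig q) y tt)) _ y).
    apply qle_refl.
  - apply qinv_supex_le. intros y. rewrite E.
    apply (le_supex (fun y => qcomp (cc_radj (proj1_sig q) tt y) (cc_ps (proj1_sig p) y tt)) _ y).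
    apply qle_refl.
Qed.

Lemma expand {Q : Quantaloid} {A : QCat Q} (HA : is_QCat A) (HS : symmetric A)
  {X : qob Q} (Phi : presheaf (Asc A) X) : is_dist Phi ->
  forall psi, Phi psi tt =
   qsup (fun h => exists y, h = qcomp (cc_radj (proj1_sig psi) tt y) (Phi (Ycc HA HS y) tt)).
Proof.
  intros [Hd1 _] psi. apply qle_antisym.
  - eapply qle_trans. { rewrite <- (qcomp1l (Phi psi tt)). apply qcomp_mono_l, cc_unit. }
    apply comp_supex_l_le. intros y.
    apply (le_supex (fun y => qcomp (cc_radj (proj1_sig psi) tt y) (Phi (Ycc HA HS y) tt)) _ y).
    rewrite <- qcompA. apply qcomp_mono_r.
    rewrite <- (yoneda1 HA HS y psi). exact (Hd1 (Ycc HA HS y) psi tt).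
  - apply supex_le. intros y. rewrite <- (yoneda2 HA HS y psi). exact (Hd1 psi (Ycc HA HS y) tt).
Qed.


Lemma R_ps_dist {Q : Quantaloid} {A : QCat Q} (HA : is_QCat A) (HS : symmetric A)
  {X : qob Q} (Phi : presheaf (Asc A) X) (HD : is_dist Phi) :
  is_dist (A := star X) (B := A) (fun y _ => Phi (Ycc HA HS y) tt).
Proof.
  split.
  - intros y' y u. destruct u. pose proof (proj1 HD (Ycc HA HS y') (Ycc HA HS y) tt) as H.
    rewrite (yoneda1 HA HS y' (Ycc HA HS y)) in H. exact H.
  - intros y u u'. cbn. rewrite qcomp1r. apply qle_refl.
Qed.

Lemma R_radj_dist {Q : Quantaloid} {A : QCat Q} (HA : is_QCat A) (HS : symmetric A)
  {X : qob Q} (Phi : presheaf (Asc A) X) (HD : is_dist Phi) :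
  is_dist (A := A) (B := star X) (fun _ y => qinv (Phi (Ycc HA HS y) tt)).
Proof.
  split.
  - intros u' u y. cbn. rewrite qcomp1l. apply qle_refl.
  - intros u x x'. rewrite (HS x x'), <- qinv_comp. apply qinv_mono.
    apply (proj1 (R_ps_dist HA HS Phi HD) x' x tt).
Qed.

Lemma R_adj {Q : Quantaloid} {A : QCat Q} (HA : is_QCat A) (HS : symmetric A)
  {X : qob Q} (Phi : presheaf (Asc A) X) (HD : is_dist Phi) (HL : sym_left_adjoint Phi) :
  adjoint (A := star X) (B := A) (fun y _ => Phi (Ycc HA HS y) tt)
     (fun _ y => qinv (Phi (Ycc HA HS y) tt)).
Proof.
  destruct HL as [Hu Hc]. split.
  - intros u u'. destruct u, u'. unfold didd, dcomp. cbn.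
    eapply qle_trans; [apply (Hu tt tt)|]. unfold dcomp, ddual.
    apply supex_le. intros psi.
    rewrite (expand HA HS Phi HD psi) at 2.
    apply comp_supex_r_le. intros y.
    apply (le_supex (fun y => qcomp (qinv (Phi (Ycc HA HS y) tt)) (Phi (Ycc HA HS y) tt)) _ y).
    rewrite qcompA. apply qcomp_mono_l.
    rewrite (sym_radj HS _ (proj2_sig psi)), <- qinv_comp. apply qinv_mono.
    rewrite <- (yoneda1 HA HS y psi). exact (proj1 HD (Ycc HA HS y) psi tt).
  - intros y x. unfold didd, dcomp. cbn.
    apply supex_le. intros u. destruct u.
    pose proof (Hc (Ycc HA HS y) (Ycc HA HS x)) as H. unfold didd in H.
    rewrite (yoneda1 HA HS y (Ycc HA HS x)) in H.
    eapply qle_trans; [| exact H]. unfold dcomp, ddual.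
    apply (le_supex (fun u => qcomp (Phi (Ycc HA HS y) u) (qinv (Phi (Ycc HA HS x) u))) _ tt).
    apply qle_refl.
Qed.

Definition Robj {Q : Quantaloid} {A : QCat Q} (HA : is_QCat A) (HS : symmetric A)
  {X : qob Q} (Phi : presheaf (Asc A) X) (HD : is_dist Phi) (HL : sym_left_adjoint Phi)
  : cc_obj A :=
  {| cc_ty := X;
     cc_ps := fun y _ => Phi (Ycc HA HS y) tt;
     cc_radj := fun _ y => qinv (Phi (Ycc HA HS y) tt);
     cc_ps_dist := R_ps_dist HA HS Phi HD;
     cc_radj_dist := R_radj_dist HA HS Phi HD;
     cc_adj := R_adj HA HS Phi HD HL |}.

Lemma Asc_complete {Q : Quantaloid} {A : QCat Q} (HA : is_QCat A) (HS : symmetric A) :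
  sym_complete (Asc A).
Proof.
  intros X Phi HD HL.
  exists (exist _ (Robj HA HS Phi HD HL) (R_adj HA HS Phi HD HL)).
  exists eq_refl. intros psi. cbn. unfold dcomp. cbn.
  apply (expand HA HS Phi HD psi).
Qed.

Lemma cast_split {Q : Quantaloid} {X X' Y Y' : qob Q} (e1 : X = X') (e2 : Y = Y')
  (f : qhom Q X Y) : cast e1 e2 f = cast eq_refl e2 (cast e1 eq_refl f).
Proof. destruct e1, e2. reflexivity. Qed.

Lemma cast_compl {Q : Quantaloid} {X X' Y Z : qob Q} (e : X = X')
  (f : qhom Q X Y) (g : qhom Q Y Z) :
  qcomp g (cast e eq_refl f) = cast e eq_refl (qcomp g f).
Proof. destruct e. reflexivity. Qed.

Lemma cast_compr {Q : Quantaloid} {X Y Z Z' : qob Q} (e : Z = Z')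
  (f : qhom Q X Y) (g : qhom Q Y Z) :
  qcomp (cast eq_refl e g) f = cast eq_refl e (qcomp g f).
Proof. destruct e. reflexivity. Qed.

Lemma qinv_supex_eq {Q : Quantaloid} {X Y} {I : Type} (F : I -> qhom Q X Y) :
  qinv (qsup (fun h => exists y, h = F y)) = qsup (fun h => exists y, h = qinv (F y)).
Proof.
  apply qle_antisym.
  - apply qinv_supex_le. intros i. apply (le_supex (fun y => qinv (F y)) _ i), qle_refl.
  - apply supex_le. intros i. apply qinv_mono. apply (le_supex F _ i), qle_refl.
Qed.

Definition Fc {Q : Quantaloid} {A B : QCat Q} (F : Functor A B) (b : cobj B) (y : cobj A)
  : qhom Q (cty A y) (cty B b) := cast (ftype F y) eq_refl (chom B b (F y)).

Definition Theta {Q : Quantaloid} {A B : QCat Q} (F : Functor A B) (p : cobj (Asc A))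
  : presheaf B (cc_ty (proj1_sig p)) :=
  fun b _ => qsup (fun h => exists y, h = qcomp (Fc F b y) (cc_ps (proj1_sig p) y tt)).

Lemma Theta_claim {Q : Quantaloid} {A B : QCat Q} (HA : is_QCat A) (F : Functor A B)
  (HF : is_functor F) (p : cobj (Asc A)) y :
  qle (cc_ps (proj1_sig p) y tt) (cast eq_refl (ftype F y) (Theta F p (F y) tt)).
Proof.
  unfold Theta. rewrite cast_supex.
  apply (le_supex (fun y0 => cast eq_refl (ftype F y) (qcomp (Fc F (F y) y0) (cc_ps (proj1_sig p) y0 tt))) _ y).
  rewrite <- (cast_comp eq_refl eq_refl (ftype F y)). cbn.
  unfold Fc.
  rewrite <- (qcomp1l (cc_ps (proj1_sig p) y tt)) at 1.
  apply qcomp_mono_l. eapply qle_trans; [apply (proj2 HA)|].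
  specialize (HF y y). rewrite cast_split in HF. exact HF.
Qed.

Lemma Theta_dist {Q : Quantaloid} {A B : QCat Q} (HB : is_QCat B) (F : Functor A B)
  (p : cobj (Asc A)) : is_dist (Theta F p).
Proof.
  split.
  - intros b' b u. unfold Theta. apply comp_supex_r_le. intros y.
    apply (le_supex (fun y => qcomp (Fc F b' y) (cc_ps (proj1_sig p) y tt)) _ y).
    rewrite qcompA. apply qcomp_mono_l. unfold Fc. rewrite cast_compl.
    apply cast_mono, (proj1 HB).
  - intros b u u'. cbn. rewrite qcomp1r. apply qle_refl.
Qed.

Lemma Theta_adj {Q : Quantaloid} {A B : QCat Q} (HA : is_QCat A) (HS : symmetric A)
  (HB : is_QCat B) (HSB : symmetric B) (F : Functor A B)
  (HF : is_functor F) (p : cobj (Asc A)) : sym_left_adjoint (Theta F p).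
Proof.
  split.
  - intros u u'. destruct u, u'. unfold didd, dcomp, ddual. cbn.
    eapply qle_trans; [apply cc_unit|]. apply supex_le. intros y.
    apply (le_supex (fun b => qcomp (qinv (Theta F p b tt)) (Theta F p b tt)) _ (F y)).
    rewrite (sym_radj HS _ (proj2_sig p)).
    pose proof (Theta_claim HA F HF p y) as H.
    eapply qle_trans. { apply qcomp_mono; [exact H | apply qinv_mono, H]. }
    rewrite cast_inv, cast_comp. apply qle_refl.
  - intros b b'. unfold didd, dcomp, ddual. cbn.
    apply supex_le. intros u. unfold Theta at 2. rewrite qinv_supex_eq.
    apply comp_supex_r_le. intros z. unfold Theta.
    apply comp_supex_l_le. intros y.
    rewrite qinv_comp, <- !qcompA.
    rewrite (qcompA (cc_ps (proj1_sig p) y tt)).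
    rewrite <- (sym_radj HS _ (proj2_sig p)).
    eapply qle_trans.
    { apply qcomp_mono_r. apply qcomp_mono_l. apply cc_counit. }
    eapply qle_trans.
    { apply qcomp_mono_r. apply qcomp_mono_l. apply (HF y z). }
    unfold Fc. rewrite cast_inv, <- HSB.
    rewrite cast_comp, cast_comp. cbn.
    eapply qle_trans; [apply qcomp_mono_r, (proj1 HB)|]. apply (proj1 HB).
Qed.

Lemma G_props {Q : Quantaloid} {A B : QCat Q} (HA : is_QCat A) (HS : symmetric A)
  (HB : is_QCat B) (HSB : symmetric B) (F : Functor A B) (HF : is_functor F)
  (Gm : cobj (Asc A) -> cobj B) (Ge : forall p, cty B (Gm p) = cc_ty (proj1_sig p))
  (HG : forall p b', Theta F p b' tt = cast (Ge p) eq_refl (chom B b' (Gm p))) :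
  let G := {| fmap := Gm; ftype := Ge |} : Functor (Asc A) B in
  is_functor G /\ fiso (fcomp G (Yf HA HS)) F.
Proof.
  intros G.
  assert (rep_eq : forall p b' Y' (e2 : cty B b' = Y'),
     cast (Ge p) e2 (chom B b' (Gm p)) = cast eq_refl e2 (Theta F p b' tt)).
  { intros. rewrite cast_split, HG. reflexivity. }
  split.
  - intros q p. unfold G. cbn [fmap ftype]. rewrite rep_eq. unfold Theta. rewrite cast_supex.
    unfold dcomp. apply supex_le. intros y.
    apply (le_supex (fun y0 => cast eq_refl (Ge q) (qcomp (Fc F (Gm q) y0) (cc_ps (proj1_sig p) y0 tt))) _ y).
    rewrite <- (cast_comp eq_refl eq_refl (Ge q)). apply qcomp_mono_l.
    unfold Fc. rewrite <- (cast_split (ftype F y) (Ge q)).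
    rewrite (HSB (Gm q) (F y)), <- cast_inv, (sym_radj HS _ (proj2_sig q)).
    apply qinv_mono. rewrite rep_eq. apply (Theta_claim HA F HF q y).
  - intros x. unfold G, fcomp. cbn [fmap ftype eq_trans Yf]. split.
    + rewrite (HSB (Gm _) (F x)), <- cast_inv, <- qinv_id. apply qinv_mono.
      rewrite rep_eq. eapply qle_trans; [| apply (Theta_claim HA F HF (Ycc HA HS x) x)].
      cbn. apply (proj2 HA).
    + rewrite rep_eq. eapply qle_trans; [| apply (Theta_claim HA F HF (Ycc HA HS x) x)].
      cbn. apply (proj2 HA).
Qed.

Lemma uniq_half {Q : Quantaloid} {A B : QCat Q} (HA : is_QCat A) (HS : symmetric A)
  (HB : is_QCat B) (G G' : Functor (Asc A) B) :
  is_functor G -> is_functor G' ->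
  (forall y, qle (qid (cty A y)) (cast (ftype G' (Ycc HA HS y)) (ftype G (Ycc HA HS y))
                  (chom B (G (Ycc HA HS y)) (G' (Ycc HA HS y))))) ->
  forall p, qle (qid (cc_ty (proj1_sig p)))
                (cast (ftype G' p) (ftype G p) (chom B (G p) (G' p))).
Proof.
  intros HG HG' H p.
  eapply qle_trans; [apply cc_unit|]. apply supex_le. intros y.
  rewrite <- (yoneda2 HA HS y p), <- (yoneda1 HA HS y p).
  rewrite <- (qcomp1l (chom (Asc A) (Ycc HA HS y) p)).
  eapply qle_trans.
  { apply qcomp_mono; [apply qcomp_mono; [apply (HG' (Ycc HA HS y) p) | apply (H y)]
                     | apply (HG p (Ycc HA HS y))]. }
  rewrite !cast_comp. apply cast_mono.
  eapply qle_trans; [apply qcomp_mono_r, (proj1 HB)|]. apply (proj1 HB).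
Qed.

Theorem proposition3p3 (Q : Quantaloid) (A : QCat Q) :
  is_QCat A -> symmetric A ->
  (* A_sc is an object of the full subcategory of symmetrically complete
     symmetric Q-categories *)
  is_QCat (Asc A) /\ symmetric (Asc A) /\ sym_complete (Asc A) /\
  (* the unit Y_A : A -> A_sc, x |-> A(-,x) *)
  exists Y : Functor A (Asc A),
    is_functor Y /\
    (forall x y, cast (ftype Y x) eq_refl (cc_ps (proj1_sig (Y x)) y tt)
                 = chom A y x) /\
    (* universal property (reflection, up to isomorphism of functors) *)
    (forall B : QCat Q, is_QCat B -> symmetric B -> sym_complete B ->
       (forall F : Functor A B, is_functor F ->
          exists G : Functor (Asc A) B, is_functor G /\ fiso (fcomp G Y) F) /\
       (forall G G' : Functor (Asc A) B, is_functor G -> is_functor G' ->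
          fiso (fcomp G Y) (fcomp G' Y) -> fiso G G')).
Proof.
  intros HA HS.
  split; [exact (Asc_QCat HA)|]. split; [exact (Asc_sym HA HS)|].
  split; [exact (Asc_complete HA HS)|].
  exists (Yf HA HS). split; [|split; [intros; reflexivity|]].
  - intros y x.
    change (qle (chom A y x) (chom (Asc A) (Ycc HA HS y) (Ycc HA HS x))).
    rewrite yoneda1. apply qle_refl.
  - intros B HB HSB HC. split.
    + intros F HF.
      assert (Hex : forall p, exists b (e : cty B b = cc_ty (proj1_sig p)),
                 forall b', Theta F p b' tt = cast e eq_refl (chom B b' b)).
      { intros p. apply HC. apply Theta_dist; exact HB. apply Theta_adj; assumption. }
      pose (Gm := fun p => proj1_sig (constructive_indefinite_description _ (Hex p))).
      assert (Hex2 : forall p, exists e : cty B (Gm p) = cc_ty (proj1_sig p),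
                 forall b', Theta F p b' tt = cast e eq_refl (chom B b' (Gm p))).
      { intros p. exact (proj2_sig (constructive_indefinite_description _ (Hex p))). }
      pose (Ge := fun p => proj1_sig (constructive_indefinite_description _ (Hex2 p))).
      pose (HG := fun p => proj2_sig (constructive_indefinite_description _ (Hex2 p))).
      destruct (G_props HA HS HB HSB F HF Gm Ge HG) as [H1 H2].
      exists (@Build_Functor Q (Asc A) B Gm Ge). split; assumption.
    + intros G G' HG HG' Hiso p. split.
      * apply (uniq_half HA HS HB G G' HG HG'). intros y. apply (proj1 (Hiso y)).
      * apply (uniq_half HA HS HB G' G HG' HG). intros y. apply (proj2 (Hiso y)).
Qed.
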